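(* Fix $\beta>2$ and let $F_\beta(\mathbf{x},r)$, $r_1^\beta<r_2^\beta$, $\boldsymbol{\sigma}_0^\beta(r)$, $\boldsymbol{\sigma}_1^\beta(r)$, $\mathbf{p}^\beta(r)$ be as in the context. Let $h_0^\beta(r)=F_\beta(\boldsymbol{\sigma}_0^\beta(r),r)$ and $h_1^\beta(r)=F_\beta(\boldsymbol{\sigma}_1^\beta(r),r)$ if $r\in(0,r_1^\beta)$, $h_1^\beta(r)=F_\beta(\mathbf{p}^\beta(r),r)$ if $r\in(r_1^\beta,r_2^\beta)$. Then $h_0^\beta(r)<h_1^\beta(r)$ for all $r\in(0,r_1^\beta)\cup(r_1^\beta,r_2^\beta)$.
   Context: $\Xi=\{(x_1,x_2): x_1,x_2\ge0,\ x_1+x_2\le1\}$, $x_0=1-x_1-x_2$, $\mathbf{v}_k=(\cos(2\pi k/3),\sin(2\pi k/3))$, $F_\beta(\mathbf{x},r)=-\frac12|\sum_{k=0}^2x_k\mathbf{v}_k|^2+\frac1\beta\sum_{k=0}^2x_k\log(3x_k)+r\,x_0-\frac r2(x_1+x_2)$ (external field of magnitude $r$, angle $\pi$). Let $h(t)=-3t(1-2t)\log\frac{1-2t}{t}-3t+1$, $f_r(t)=\frac{2}{3(1-r-3t)}\log\frac{1-2t}{t}$, $k_r=(1-r)/3$; for $0<r<1$, $m_0(r)$ is the unique solution in $(0,k_r)$ of $h(t)=r$; $r_2^\beta$ is the unique $r\in(0,1)$ with $f_r(m_0(r))=\beta$; $r_1^\beta=1-\frac2\beta-\frac{2}{3\beta}\log(\frac{3\beta}2-2)$.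 For every $r>0$, $q_\beta(r)$ is the unique solution of $f_r(t)=\beta$ in $(1/3,1/2)$ and $\boldsymbol{\sigma}_0^\beta(r)=(q_\beta(r),q_\beta(r))$; for $r\in(0,r_2^\beta)$, $u_\beta(r)$ is the unique solution of $f_r(t)=\beta$ in $(m_0(r),k_r)$ and $\mathbf{p}^\beta(r)=(u_\beta(r),u_\beta(r))$. Let $G_\beta(x)=\frac1\beta\log x-\frac32x$, $l_\beta=2/(3\beta)$, $g_\beta=G_\beta(l_\beta)$; for $y<g_\beta$, $H_\beta(y)<l_\beta<K_\beta(y)$ solve $G_\beta(x)=y$, and $H_\beta(g_\beta)=K_\beta(g_\beta)=l_\beta$. For $r\le r_1^\beta$, $y_1^\beta(r)$ is the unique $y\le g_\beta$ with $K_\beta(y-3r/2)+H_\beta(y)+K_\beta(y)=1$, and $\boldsymbol{\sigma}_1^\beta(r)=(K_\beta(y_1^\beta(r)),H_\beta(y_1^\beta(r)))$. *)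

(* Defs.v *)
From Stdlib Require Import Reals Lra ClassicalEpsilon.
Open Scope R_scope.

(* "the unique x such that P x": Hilbert choice; when P has exactly one
   witness (as asserted in the paper) this is that witness. *)
Definition the_unique (P : R -> Prop) : R := epsilon (inhabits 0) P.

Definition vx (k : nat) : R := cos (2 * PI * INR k / 3).
Definition vy (k : nat) : R := sin (2 * PI * INR k / 3).

Definition Fb (beta x1 x2 r : R) : R :=
  let x0 := 1 - x1 - x2 in
  let sx := x0 * vx 0 + x1 * vx 1 + x2 * vx 2 in
  let sy := x0 * vy 0 + x1 * vy 1 + x2 * vy 2 in
  - / 2 * (sx ^ 2 + sy ^ 2)
  + / beta * (x0 * ln (3 * x0) + x1 * ln (3 * x1) + x2 * ln (3 * x2))
  + r * x0 - r / 2 * (x1 + x2).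

Definition hfun (t : R) : R :=
  - 3 * t * (1 - 2 * t) * ln ((1 - 2 * t) / t) - 3 * t + 1.

Definition fr (r t : R) : R :=
  2 / (3 * (1 - r - 3 * t)) * ln ((1 - 2 * t) / t).

Definition kr (r : R) : R := (1 - r) / 3.

Definition m0 (r : R) : R :=
  the_unique (fun t => 0 < t < kr r /\ hfun t = r).

Definition r2 (beta : R) : R :=
  the_unique (fun r => 0 < r < 1 /\ fr r (m0 r) = beta).

Definition r1 (beta : R) : R :=
  1 - 2 / beta - 2 / (3 * beta) * ln (3 * beta / 2 - 2).

Definition qb (beta r : R) : R :=
  the_unique (fun t => 1 / 3 < t < 1 / 2 /\ fr r t = beta).

Definition ub (beta r : R) : R :=
  the_unique (fun t => m0 r < t < kr r /\ fr r t = beta).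

Definition Gb (beta x : R) : R := / beta * ln x - 3 / 2 * x.
Definition lb (beta : R) : R := 2 / (3 * beta).
Definition gb (beta : R) : R := Gb beta (lb beta).

Definition Hb (beta y : R) : R :=
  if Rlt_dec y (gb beta)
  then the_unique (fun x => 0 < x < lb beta /\ Gb beta x = y)
  else lb beta.

Definition Kb (beta y : R) : R :=
  if Rlt_dec y (gb beta)
  then the_unique (fun x => lb beta < x /\ Gb beta x = y)
  else lb beta.

Definition y1 (beta r : R) : R :=
  the_unique (fun y => y <= gb beta /\
     Kb beta (y - 3 * r / 2) + Hb beta y + Kb beta y = 1).

Definition h0 (beta r : R) : R := Fb beta (qb beta r) (qb beta r) r.

Definition h1_sigma1 (beta r : R) : R :=
  Fb beta (Kb beta (y1 beta r)) (Hb beta (y1 beta r)) r.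

Definition h1_p (beta r : R) : R := Fb beta (ub beta r) (ub beta r) r.

(* Main.v *)
Require Import Defs.
From Stdlib Require Import Reals Lra ClassicalEpsilon Ranalysis5.
From Coquelicot Require Import Coquelicot.
Open Scope R_scope.

Lemma vx0 : vx 0 = 1. Proof. unfold vx; simpl. replace (2*PI*0/3) with 0 by field. apply cos_0. Qed.
Lemma vy0 : vy 0 = 0. Proof. unfold vy; simpl. replace (2*PI*0/3) with 0 by field. apply sin_0. Qed.
Lemma vx1 : vx 1 = -/2. Proof. unfold vx; simpl. replace (2*PI*1/3) with (PI - PI/3) by field.
  rewrite Rtrigo_facts.cos_pi_minus, cos_PI3. field. Qed.
Lemma vy1 : vy 1 = sqrt 3 / 2. Proof. unfold vy; simpl. replace (2*PI*1/3) with (PI - PI/3) by field.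
  rewrite sin_PI_x, sin_PI3. field. Qed.
Lemma vx2 : vx 2 = -/2. Proof. unfold vx; simpl. replace (2*PI*(1+1)/3) with (PI/3 + PI) by field.
  rewrite neg_cos, cos_PI3. field. Qed.
Lemma vy2 : vy 2 = - (sqrt 3 / 2). Proof. unfold vy; simpl. replace (2*PI*(1+1)/3) with (PI/3 + PI) by field.
  rewrite neg_sin, sin_PI3. field. Qed.

Definition om (beta x : R) := -(3/4)*x^2 + /beta * (x * ln (3*x)).

Lemma Fb_eq beta x1 x2 r : Fb beta x1 x2 r =
  om beta (1-x1-x2) + om beta x1 + om beta x2 + /4 + r*(1-x1-x2) - r/2*(x1+x2).
Proof.
  unfold Fb, om. rewrite vx0, vy0, vx1, vy1, vx2, vy2.
  assert (H3 : sqrt 3 * sqrt 3 = 3) by (apply sqrt_sqrt; lra).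
  set (s := sqrt 3) in *. set (l0 := ln (3*(1-x1-x2))). set (l1 := ln (3*x1)). set (l2 := ln (3*x2)).
  simpl.
  assert (Hy: ((1-x1-x2)*0 + x1*(s/2) + x2*-(s/2)) * (((1-x1-x2)*0 + x1*(s/2)+x2*-(s/2))*1) = 3/4*(x1-x2)^2).
  { replace (((1-x1-x2)*0 + x1*(s/2) + x2*-(s/2)) * (((1-x1-x2)*0 + x1*(s/2)+x2*-(s/2))*1)) with ((s*s)/4*(x1-x2)^2) by field. rewrite H3. field. }
  rewrite Hy. set (ib := / beta). field.
Qed.

Lemma der_cont f x l : is_derive f x l -> continuity_pt f x.
Proof.
  intro H. apply continuity_pt_filterlim. apply (ex_derive_continuous f x). exists l; exact H.
Qed.

Lemma mvt_ex f df a b : a <= b -> (forall x, a <= x <= b -> is_derive f x (df x)) ->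
  exists c, a <= c <= b /\ f b - f a = df c * (b - a).
Proof.
  intros Hab Hd. destruct (MVT_gen f a b df) as [c [Hc Hc2]].
  - intros x Hx. rewrite Rmin_left, Rmax_right in Hx by lra. apply Hd; lra.
  - intros x Hx. rewrite Rmin_left, Rmax_right in Hx by lra. apply (der_cont f x (df x)); apply Hd; lra.
  - exists c. rewrite Rmin_left, Rmax_right in Hc by lra. split; auto.
Qed.

Lemma mvt_nonpos f df a b : a <= b -> (forall x, a <= x <= b -> is_derive f x (df x)) ->
  (forall x, a <= x <= b -> df x <= 0) -> f b <= f a.
Proof.
  intros Hab Hd Hs. destruct (mvt_ex f df a b Hab Hd) as [c [Hc E]].
  assert (df c * (b - a) <= 0). { assert (df c <= 0) by (apply Hs; lra). nra. } lra.
Qed.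

Lemma mvt_nonneg f df a b : a <= b -> (forall x, a <= x <= b -> is_derive f x (df x)) ->
  (forall x, a <= x <= b -> 0 <= df x) -> f a <= f b.
Proof.
  intros Hab Hd Hs. destruct (mvt_ex f df a b Hab Hd) as [c [Hc E]].
  assert (0 <= df c * (b - a)). { assert (0 <= df c) by (apply Hs; lra). nra. } lra.
Qed.

Lemma mvt_neg f df a b : a < b -> (forall x, a <= x <= b -> is_derive f x (df x)) ->
  (forall x, a <= x <= b -> df x < 0) -> f b < f a.
Proof.
  intros Hab Hd Hs. destruct (mvt_ex f df a b (Rlt_le _ _ Hab) Hd) as [c [Hc E]].
  assert (df c * (b - a) < 0). { assert (df c < 0) by (apply Hs; lra). nra. } lra.
Qed.

Lemma mvt_pos f df a b : a < b -> (forall x, a <= x <= b -> is_derive f x (df x)) ->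
  (forall x, a <= x <= b -> 0 < df x) -> f a < f b.
Proof.
  intros Hab Hd Hs. destruct (mvt_ex f df a b (Rlt_le _ _ Hab) Hd) as [c [Hc E]].
  assert (0 < df c * (b - a)). { assert (0 < df c) by (apply Hs; lra). nra. } lra.
Qed.

Lemma ln_le' x y : 0 < x -> x <= y -> ln x <= ln y.
Proof. intros. destruct (Req_dec x y). subst; lra. left; apply ln_increasing; lra. Qed.
Lemma ln_pos' x : 1 < x -> 0 < ln x.
Proof. intros. rewrite <- ln_1. apply ln_increasing; lra. Qed.
Lemma ln_neg' x : 0 < x -> x < 1 -> ln x < 0.
Proof. intros. rewrite <- ln_1. apply ln_increasing; lra. Qed.
Lemma ln_le_xm1 x : 0 < x -> ln x <= x - 1.
Proof. intros. pose proof (exp_ineq1_le (ln x)). rewrite exp_ln in H0; lra. Qed.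
Lemma ln_div' x y : 0 < x -> 0 < y -> ln (x / y) = ln x - ln y.
Proof. intros. unfold Rdiv. rewrite ln_mult, ln_Rinv; try lra. apply Rinv_0_lt_compat; lra. Qed.

Section GS.
Variable beta : R.
Hypothesis hb : 2 < beta.

Let l := lb beta.
Lemma l_pos : 0 < lb beta. Proof. unfold lb. apply Rdiv_lt_0_compat; lra. Qed.
Lemma l_lt : lb beta < 1/3. Proof. unfold lb. apply (Rmult_lt_reg_r (3*beta)). lra. field_simplify; lra. Qed.

Lemma G_der x : 0 < x -> is_derive (Gb beta) x (/beta * /x - 3/2).
Proof. intros. unfold Gb. auto_derive. lra. ring. Qed.

Lemma Gd_pos x : 0 < x -> x < lb beta -> 0 < /beta * /x - 3/2.
Proof. intros H1 H2. unfold lb in H2.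
  assert (beta * x < 2/3). { apply (Rmult_lt_reg_r (/beta)). apply Rinv_0_lt_compat; lra.
    replace (beta*x*/beta) with x by (field; lra). replace (2/3*/beta) with (2/(3*beta)) by (field; lra). lra. }
  assert (/beta * /x = / (beta*x)) by (field; split; lra). rewrite H0.
  assert (0 < beta * x) by nra. assert (/(beta*x) > 3/2). { apply (Rmult_lt_reg_r (beta*x)); auto. rewrite Rinv_l; lra. } lra. Qed.

Lemma Gd_neg x : lb beta < x -> /beta * /x - 3/2 < 0.
Proof. intros H2. pose proof l_pos. unfold lb in H2, H.
  assert (beta * x > 2/3). { apply (Rmult_lt_reg_r (/beta)). apply Rinv_0_lt_compat; lra.
    replace (beta*x*/beta) with x by (field; lra). replace (2/3*/beta) with (2/(3*beta)) by (field; lra). lra. }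
  assert (/beta * /x = / (beta*x)) by (field; split; lra). rewrite H1.
  assert (0 < beta * x) by nra. assert (/(beta*x) < 3/2). { apply (Rmult_lt_reg_r (beta*x)); auto. rewrite Rinv_l; lra. } lra. Qed.

Lemma Gd_nonpos x : lb beta <= x -> /beta * /x - 3/2 <= 0.
Proof. intros H. destruct (Req_dec x (lb beta)). subst. unfold lb. right. field. lra. left; apply Gd_neg; lra. Qed.
Lemma Gd_nonneg x : 0 < x -> x <= lb beta -> 0 <= /beta * /x - 3/2.
Proof. intros H0 H. destruct (Req_dec x (lb beta)). subst. unfold lb. right. field. lra. left; apply Gd_pos; lra. Qed.

Lemma G_inc x y : 0 < x -> x < y -> y < lb beta -> Gb beta x < Gb beta y.
Proof. intros. apply (mvt_pos _ (fun z => /beta * /z - 3/2)); auto.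
  intros; apply G_der; lra. intros; apply Gd_pos; lra. Qed.
Lemma G_dec x y : lb beta < x -> x < y -> Gb beta y < Gb beta x.
Proof. pose proof l_pos. intros. apply (mvt_neg _ (fun z => /beta * /z - 3/2)); auto.
  intros; apply G_der; lra. intros; apply Gd_neg; lra. Qed.
Lemma G_incw x y : 0 < x -> x <= y -> y <= lb beta -> Gb beta x <= Gb beta y.
Proof. intros. apply (mvt_nonneg _ (fun z => /beta * /z - 3/2)); auto.
  intros; apply G_der; lra. intros; apply Gd_nonneg; lra. Qed.
Lemma G_decw x y : lb beta <= x -> x <= y -> Gb beta y <= Gb beta x.
Proof. pose proof l_pos. intros. apply (mvt_nonpos _ (fun z => /beta * /z - 3/2)); auto.
  intros; apply G_der; lra. intros; apply Gd_nonpos; lra. Qed.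
Lemma G_le_g x : 0 < x -> Gb beta x <= gb beta.
Proof. intros. unfold gb. destruct (Rle_dec x (lb beta)). apply G_incw; lra. apply G_decw; lra. Qed.
Lemma G_lt_g x : 0 < x -> x <> lb beta -> Gb beta x < gb beta.
Proof. intros. unfold gb. destruct (Rlt_dec x (lb beta)).
  - apply Rlt_le_trans with (Gb beta ((x + lb beta)/2)). apply G_inc; lra. apply G_incw; lra.
  - apply Rlt_le_trans with (Gb beta ((x + lb beta)/2)). apply G_dec; lra. apply G_decw; lra. Qed.

Lemma G_cont x : 0 < x -> continuity_pt (Gb beta) x.
Proof. intros. apply (der_cont _ _ _ (G_der x H)). Qed.

Lemma H_exists y : y < gb beta -> exists x, 0 < x < lb beta /\ Gb beta x = y.
Proof.
  intros Hy. pose proof l_pos.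
  set (x0 := Rmin (lb beta / 2) (exp (beta*y)/2)).
  assert (Hx0p : 0 < x0). { unfold x0. apply Rmin_glb_lt. lra. pose proof (exp_pos (beta*y)); lra. }
  assert (Hx0l : x0 < lb beta). { unfold x0. apply Rle_lt_trans with (lb beta/2). apply Rmin_l. lra. }
  assert (HG0 : Gb beta x0 < y).
  { unfold Gb. assert (ln x0 < beta * y).
    { rewrite <- (ln_exp (beta*y)). apply ln_increasing; auto. apply Rle_lt_trans with (exp (beta*y)/2). apply Rmin_r. pose proof (exp_pos (beta*y)); lra. }
    assert (/beta * ln x0 < y). { apply (Rmult_lt_reg_l beta). lra. rewrite <- Rmult_assoc, Rinv_r; lra. } lra. }
  destruct (IVT_interv (fun x => Gb beta x - y) x0 (lb beta)) as [z [Hz Ez]]; auto.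
  - intros a Ha. apply continuity_pt_minus. apply G_cont; lra. apply continuity_pt_const. intros u v; auto.
  - lra.
  - simpl. fold (gb beta). lra.
  - exists z. assert (z <> lb beta). { intro E. subst z. unfold gb in Hy. lra. } split. lra. lra.
Qed.

Lemma K_exists y : y < gb beta -> exists x, lb beta < x /\ Gb beta x = y.
Proof.
  intros Hy. pose proof l_pos.
  set (x1 := Rmax (2 * lb beta) (Rabs y + 1)).
  assert (Hx1 : 2 * lb beta <= x1) by apply Rmax_l.
  assert (Hx1' : Rabs y + 1 <= x1) by apply Rmax_r.
  assert (HG1 : Gb beta x1 < y).
  { unfold Gb. pose proof (ln_le_xm1 x1 ltac:(lra)).
    assert (/beta * ln x1 <= /beta * (x1 - 1)). { apply Rmult_le_compat_l. left; apply Rinv_0_lt_compat; lra. auto. }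
    assert (/beta * (x1-1) < x1/2). { apply (Rmult_lt_reg_l beta). lra. rewrite <- Rmult_assoc, Rinv_r by lra. nra. }
    pose proof (Rle_abs (-y)). rewrite Rabs_Ropp in H3. lra. }
  destruct (IVT_interv (fun x => y - Gb beta x) (lb beta) x1) as [z [Hz Ez]]; auto.
  - intros a Ha. apply continuity_pt_minus. apply continuity_pt_const. intros u v; auto. apply G_cont; lra.
  - lra.
  - simpl. fold (gb beta). lra.
  - lra.
  - exists z. assert (z <> lb beta). { intro E. subst z. unfold gb in Hy. lra. } split. lra. lra.
Qed.

Lemma Hb_spec y : y < gb beta -> 0 < Hb beta y < lb beta /\ Gb beta (Hb beta y) = y.
Proof. intros. unfold Hb. destruct (Rlt_dec y (gb beta)); [|contradiction].
  unfold the_unique. apply epsilon_spec. apply H_exists; auto. Qed.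
Lemma Kb_spec y : y < gb beta -> lb beta < Kb beta y /\ Gb beta (Kb beta y) = y.
Proof. intros. unfold Kb. destruct (Rlt_dec y (gb beta)); [|contradiction].
  unfold the_unique. apply epsilon_spec. apply K_exists; auto. Qed.
Lemma Hb_spec' y : y <= gb beta -> 0 < Hb beta y <= lb beta /\ Gb beta (Hb beta y) = y.
Proof. intros. pose proof l_pos. destruct (Rlt_dec y (gb beta)). destruct (Hb_spec y r); split; lra.
  assert (y = gb beta) by lra. unfold Hb. destruct (Rlt_dec y (gb beta)); [contradiction|]. subst; unfold gb; split; lra. Qed.
Lemma Kb_spec' y : y <= gb beta -> lb beta <= Kb beta y /\ Gb beta (Kb beta y) = y.
Proof. intros. pose proof l_pos. destruct (Rlt_dec y (gb beta)). destruct (Kb_spec y r); split; lra.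
  assert (y = gb beta) by lra. unfold Kb. destruct (Rlt_dec y (gb beta)); [contradiction|]. subst; unfold gb; split; lra. Qed.

End GS.

Lemma om_der beta x : 0 < x -> is_derive (om beta) x (Gb beta x + /beta * (ln 3 + 1)).
Proof. intros. unfold om, Gb. auto_derive. all: try lra.
  rewrite ln_mult by lra. set (ib := /beta). field. lra. Qed.

Lemma om_tangent beta (hb : 2 < beta) a t : lb beta <= a -> lb beta <= t ->
  om beta t <= om beta a + (Gb beta a + /beta * (ln 3 + 1)) * (t - a).
Proof.
  intros Ha Ht. pose proof (l_pos beta hb).
  set (C := /beta * (ln 3 + 1)).
  set (psi := fun x => om beta x - (Gb beta a + C) * (x - a)).
  assert (Hd : forall x, 0 < x -> is_derive psi x (Gb beta x - Gb beta a)).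
  { intros x Hx. unfold psi, om. unfold C. set (Ga := Gb beta a). auto_derive. all: try lra.
    unfold Gb. rewrite ln_mult by lra. set (ib := /beta). field. lra. }
  assert (psi t <= psi a).
  { destruct (Rle_dec a t).
    - apply (mvt_nonpos psi (fun x => Gb beta x - Gb beta a)); auto. intros; apply Hd; lra.
      intros. pose proof (G_decw beta hb a x Ha ltac:(lra)). lra.
    - apply (mvt_nonneg psi (fun x => Gb beta x - Gb beta a)); try lra. intros; apply Hd; lra.
      intros. pose proof (G_decw beta hb x a ltac:(lra) ltac:(lra)). lra. }
  unfold psi in H0. fold C. lra.
Qed.

Lemma core1 beta (hb : 2 < beta) r a b : lb beta <= a -> lb beta <= b ->
  Gb beta a = Gb beta b - 3*r/2 ->
  Fb beta ((a+b)/2) (1-a-b) r <= Fb beta b (1-a-b) r.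
Proof.
  intros Ha Hb' HG. rewrite !Fb_eq.
  replace (1 - (a+b)/2 - (1-a-b)) with ((a+b)/2) by lra.
  replace (1 - b - (1-a-b)) with a by lra.
  pose proof (om_tangent beta hb a ((a+b)/2) Ha ltac:(lra)).
  pose proof (om_tangent beta hb b ((a+b)/2) Hb' ltac:(lra)).
  rewrite HG in H. set (C := /beta*(ln 3 + 1)) in *. set (gbv := Gb beta b) in *. 
  nra.
Qed.

Lemma perm1 beta r t c : t = (1-c)/2 ->
  Fb beta t c r - Fb beta t t r = 3/2 * r * (t - c).
Proof. intros E. rewrite !Fb_eq. replace (1-t-c) with t by lra. replace (1-t-t) with c by lra. lra. Qed.

Definition Lf (t : R) := ln ((1 - 2*t)/t).
Definition gf (beta r t : R) := 3*(1-r-3*t) - 2/beta * Lf t.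

Lemma Lf_eq t : 0 < t < 1/2 -> Lf t = ln (3*(1-2*t)) - ln (3*t).
Proof. intros. unfold Lf. rewrite <- ln_div' by lra. f_equal. field. lra. Qed.

Lemma Lf_der t : 0 < t < 1/2 -> is_derive Lf t (- / (t*(1-2*t))).
Proof. intros. apply (is_derive_ext (fun t => ln ((1-2*t)/t))). reflexivity.
  auto_derive. split. lra. split. apply Rmult_lt_0_compat; [lra| apply Rinv_0_lt_compat; lra]. auto. field. split; lra. Qed.

Lemma Lf_pos t : 0 < t < 1/3 -> 0 < Lf t.
Proof. intros. unfold Lf. apply ln_pos'. apply (Rmult_lt_reg_r t). lra. field_simplify; lra. Qed.
Lemma Lf_neg t : 1/3 < t < 1/2 -> Lf t < 0.
Proof. intros. unfold Lf. apply ln_neg'. apply Rdiv_lt_0_compat; lra. apply (Rmult_lt_reg_r t). lra. field_simplify; lra. Qed.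
Lemma Lf_13 : Lf (1/3) = 0.
Proof. unfold Lf. replace ((1-2*(1/3))/(1/3)) with 1 by field. apply ln_1. Qed.
Lemma Lf_nonneg t : 0 < t <= 1/3 -> 0 <= Lf t.
Proof. intros. destruct (Req_dec t (1/3)). subst; rewrite Lf_13; lra. left; apply Lf_pos; lra. Qed.
Lemma Lf_dec x y : 0 < x -> x < y -> y < 1/2 -> Lf y < Lf x.
Proof. intros. apply (mvt_neg Lf (fun t => - / (t*(1-2*t)))); auto.
  intros; apply Lf_der; lra. intros. assert (0 < x0*(1-2*x0)) by nra. pose proof (Rinv_0_lt_compat _ H3). lra. Qed.

Lemma gf_der beta r t : 0 < beta -> 0 < t < 1/2 -> is_derive (gf beta r) t (-9 + 2/(beta*(t*(1-2*t)))).
Proof. intros Hb H. unfold gf.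
  apply (is_derive_ext (fun t => 3*(1-r-3*t) - 2/beta * Lf t)). reflexivity.
  replace (-9 + 2/(beta*(t*(1-2*t)))) with (3*(0-0-3*1) - 2/beta * (- / (t*(1-2*t)))).
  apply (is_derive_minus (fun t => 3*(1-r-3*t)) (fun t => 2/beta * Lf t)).
  - auto_derive. auto. ring.
  - apply (is_derive_scal Lf). apply Lf_der; auto.
  - field. split. lra. split; lra.
Qed.

Definition phi beta r t := Fb beta t t r.

Lemma phi_der beta r t : 0 < t < 1/2 -> is_derive (phi beta r) t (gf beta r t).
Proof. intros H. apply (is_derive_ext (fun t => om beta (1-t-t) + om beta t + om beta t + /4 + r*(1-t-t) - r/2*(t+t))).
  intros; unfold phi; rewrite Fb_eq; reflexivity.
  unfold om. auto_derive. all: try lra.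
  unfold gf, Rdiv. rewrite Lf_eq by lra. replace (1 + - t + - t) with (1-2*t) by ring.
  set (ib := /beta). set (A := ln (3*(1-2*t))). set (B := ln (3*t)). field. lra.
Qed.

Lemma gd_nonpos beta z : 0 < beta -> 0 < z < 1/2 -> 2 <= 9*beta*(z*(1-2*z)) -> -9 + 2/(beta*(z*(1-2*z))) <= 0.
Proof. intros. assert (0 < beta*(z*(1-2*z))) by (apply Rmult_lt_0_compat; nra).
  assert (2/(beta*(z*(1-2*z))) <= 9). { apply (Rmult_le_reg_r (beta*(z*(1-2*z)))); auto.
   unfold Rdiv. rewrite Rmult_assoc, Rinv_l by lra. lra. } lra. Qed.
Lemma gd_nonneg beta z : 0 < beta -> 0 < z < 1/2 -> 9*beta*(z*(1-2*z)) <= 2 -> 0 <= -9 + 2/(beta*(z*(1-2*z))).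
Proof. intros. assert (0 < beta*(z*(1-2*z))) by (apply Rmult_lt_0_compat; nra).
  assert (9 <= 2/(beta*(z*(1-2*z)))). { apply (Rmult_le_reg_r (beta*(z*(1-2*z)))); auto.
   unfold Rdiv. rewrite Rmult_assoc, Rinv_l by lra. lra. } lra. Qed.

Lemma quad_dec x y : 1/4 <= x -> x <= y -> y*(1-2*y) <= x*(1-2*x).
Proof. intros. nra. Qed.
Lemma quad_inc x y : x <= y -> y <= 1/4 -> x*(1-2*x) <= y*(1-2*y).
Proof. intros. nra. Qed.
Lemma quad_inc_s x y : x < y -> y <= 1/4 -> x*(1-2*x) < y*(1-2*y).
Proof. intros. nra. Qed.

Lemma gf13 beta r : gf beta r (1/3) = -3*r.
Proof. unfold gf. rewrite Lf_13, Rmult_0_r. lra. Qed.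

Lemma fr_gf beta r t : 0 < beta -> 1 - r - 3*t <> 0 -> (fr r t = beta <-> gf beta r t = 0).
Proof. intros Hb HD. unfold fr, gf. split; intro E.
  - assert (Lf t = 3*beta*(1-r-3*t)/2). { unfold Lf. rewrite <- E. field. auto. }
    rewrite H. field. lra.
  - assert (Lf t = 3*beta*(1-r-3*t)/2). { apply (Rmult_eq_reg_l (2/beta)). 2: apply Rgt_not_eq; apply Rdiv_lt_0_compat; lra. field_simplify; lra. }
    unfold Lf in H. rewrite H. field. auto.
Qed.

Section QS.
Variable beta r : R.
Hypothesis hb : 2 < beta.
Hypothesis hr : 0 < r.

Lemma q_exists : exists t, 1/3 < t < 1/2 /\ fr r t = beta.
Proof.
  set (M := beta*(3*r+1)).
  assert (HM : 0 < M) by (unfold M; nra).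
  set (t1 := 1/(2 + exp (-M))).
  assert (He : 0 < exp (-M) < 1). { split. apply exp_pos. rewrite <- exp_0. apply exp_increasing. lra. }
  assert (Ht1 : 1/3 < t1 < 1/2). { unfold t1. split; apply (Rmult_lt_reg_r (2 + exp (-M))); try lra; field_simplify; lra. }
  assert (HL : Lf t1 = - M). { unfold Lf. replace ((1-2*t1)/t1) with (exp (-M)). apply ln_exp. unfold t1. field. lra. }
  destruct (IVT_interv (gf beta r) (1/3) t1) as [z [Hz Ez]].
  - intros a Ha. apply (der_cont _ _ _ (gf_der beta r a ltac:(lra) ltac:(lra))).
  - lra.
  - rewrite gf13. lra.
  - unfold gf. rewrite HL. unfold M. replace (2/beta * - (beta*(3*r+1))) with (-(2*(3*r+1))) by (field; lra). lra.
  - exists z. assert (z <> 1/3). { intro E. subst z. rewrite gf13 in Ez. lra. }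
    split. lra. apply fr_gf; lra.
Qed.

Lemma qb_spec : 1/3 < qb beta r < 1/2 /\ gf beta r (qb beta r) = 0.
Proof. assert (H : 1/3 < qb beta r < 1/2 /\ fr r (qb beta r) = beta).
  { unfold qb, the_unique. apply epsilon_spec. apply q_exists. }
  destruct H as [H1 H2]. split; auto. apply fr_gf in H2; lra. Qed.

Lemma g_dec_on a b : 1/4 <= a -> a <= b -> b < 1/2 -> 2 <= 9*beta*(b*(1-2*b)) -> gf beta r b <= gf beta r a.
Proof. intros. apply (mvt_nonpos (gf beta r) (fun z => -9 + 2/(beta*(z*(1-2*z))))); auto.
  intros; apply gf_der; lra. intros. apply gd_nonpos; try lra. pose proof (quad_dec x b); nra. Qed.
Lemma g_inc_on a b : 1/4 <= a -> a <= b -> b < 1/2 -> 9*beta*(a*(1-2*a)) <= 2 -> gf beta r a <= gf beta r b.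
Proof. intros. apply (mvt_nonneg (gf beta r) (fun z => -9 + 2/(beta*(z*(1-2*z))))); auto.
  intros; apply gf_der; lra. intros. apply gd_nonneg; try lra. pose proof (quad_dec a x); nra. Qed.

Lemma claim1 x : 1/3 <= x <= qb beta r -> gf beta r x <= 0.
Proof. intros Hx. destruct qb_spec as [Hq Eq].
  destruct (Rle_dec 2 (9*beta*(x*(1-2*x)))).
  - pose proof (g_dec_on (1/3) x ltac:(lra) ltac:(lra) ltac:(lra) r0). rewrite gf13 in H. lra.
  - pose proof (g_inc_on x (qb beta r) ltac:(lra) ltac:(lra) ltac:(lra) ltac:(lra)). lra.
Qed.

Lemma claim2 x : qb beta r <= x < 1/2 -> 0 <= gf beta r x.
Proof. intros Hx. destruct qb_spec as [Hq Eq].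
  destruct (Rle_dec 2 (9*beta*(qb beta r*(1-2*qb beta r)))).
  - pose proof (g_dec_on (1/3) (qb beta r) ltac:(lra) ltac:(lra) ltac:(lra) r0). rewrite gf13 in H. lra.
  - pose proof (g_inc_on (qb beta r) x ltac:(lra) ltac:(lra) ltac:(lra) ltac:(lra)). lra.
Qed.

Lemma phi_min t : 1/3 <= t < 1/2 -> phi beta r (qb beta r) <= phi beta r t.
Proof. intros Ht. destruct qb_spec as [Hq Eq].
  destruct (Rle_dec t (qb beta r)).
  - apply (mvt_nonpos (phi beta r) (gf beta r)); auto.
    intros; apply phi_der; lra. intros; apply claim1; lra.
  - apply (mvt_nonneg (phi beta r) (gf beta r)); try lra.
    intros; apply phi_der; lra. intros; apply claim2; lra.
Qed.

End QS.

Section HK.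
Variable beta : R.
Hypothesis hb : 2 < beta.

Lemma K_inj x y : lb beta < x -> lb beta < y -> Gb beta x = Gb beta y -> x = y.
Proof. intros. destruct (Rtotal_order x y) as [H2|[H2|H2]]; auto.
  pose proof (G_dec beta hb x y H H2); lra. pose proof (G_dec beta hb y x H0 H2); lra. Qed.

Lemma Hb_cont y0 : y0 < gb beta -> continuity_pt (Hb beta) y0.
Proof.
  intros Hy. destruct (Hb_spec beta hb y0 Hy) as [Hc Ec].
  set (c0 := Hb beta y0) in *.
  set (lo := c0/2). set (hi := (c0 + lb beta)/2).
  assert (Hlo : Gb beta lo < y0) by (rewrite <- Ec; apply G_inc; unfold lo; lra).
  assert (Hhi : y0 < Gb beta hi) by (rewrite <- Ec; apply G_inc; unfold hi; lra).
  assert (Hhig : Gb beta hi < gb beta) by (apply G_lt_g; unfold hi; lra).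
  apply (continuity_pt_recip_interv (Gb beta) (Hb beta) lo hi).
  - unfold lo, hi; lra.
  - intros x y Hx Hxy Hy'. apply G_inc; unfold lo, hi in *; lra.
  - intros x H1 H2. unfold comp, id. apply (Hb_spec beta hb x). lra.
  - intros x H1 H2. destruct (Hb_spec beta hb x ltac:(lra)) as [Hx Ex].
    split.
    + destruct (Rle_dec lo (Hb beta x)); auto. exfalso.
      pose proof (G_inc beta hb (Hb beta x) lo ltac:(lra) ltac:(lra) ltac:(unfold lo; lra)). lra.
    + destruct (Rle_dec (Hb beta x) hi); auto. exfalso.
      pose proof (G_inc beta hb hi (Hb beta x) ltac:(unfold hi; lra) ltac:(lra) ltac:(lra)). lra.
  - intros a Ha. apply G_cont; unfold lo in *; lra.
  - lra.
Qed.

Lemma Kb_cont y0 : y0 < gb beta -> continuity_pt (Kb beta) y0.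
Proof.
  intros Hy. destruct (Kb_spec beta hb y0 Hy) as [Hc Ec].
  set (c0 := Kb beta y0) in *.
  set (lo := (c0 + lb beta)/2). set (hi := c0 + 1).
  assert (Hlo : y0 < Gb beta lo) by (rewrite <- Ec; apply G_dec; unfold lo; lra).
  assert (Hhi : Gb beta hi < y0) by (rewrite <- Ec; apply G_dec; unfold hi; lra).
  assert (Hlog : Gb beta lo < gb beta) by (apply G_lt_g; pose proof (l_pos beta hb); unfold lo; lra).
  assert (C : continuity_pt (fun z => Kb beta (- z)) (- y0)).
  { apply (continuity_pt_recip_interv (fun x => - Gb beta x) (fun z => Kb beta (- z)) lo hi).
    - unfold lo, hi; lra.
    - intros x y Hx Hxy Hy'. assert (Gb beta y < Gb beta x) by (apply G_dec; unfold lo in *; lra). lra.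
    - intros x H1 H2. unfold comp, id. rewrite (proj2 (Kb_spec beta hb (-x) ltac:(lra))). ring.
    - intros x H1 H2. destruct (Kb_spec beta hb (-x) ltac:(lra)) as [Hx Ex].
      split.
      + destruct (Rle_dec lo (Kb beta (-x))); auto. exfalso.
        pose proof (G_dec beta hb (Kb beta (-x)) lo ltac:(lra) ltac:(lra)). lra.
      + destruct (Rle_dec (Kb beta (-x)) hi); auto. exfalso.
        pose proof (G_dec beta hb hi (Kb beta (-x)) ltac:(unfold hi; lra) ltac:(lra)). lra.
    - intros a Ha. apply continuity_pt_opp. apply G_cont. pose proof (l_pos beta hb). unfold lo in *; lra.
    - lra. }
  apply (continuity_pt_ext (fun y => (fun z => Kb beta (- z)) (- y))).
  intros; simpl; f_equal; ring.
  apply (continuity_pt_comp Ropp (fun z => Kb beta (- z))). apply continuity_pt_opp, continuity_pt_id. auto.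
Qed.
End HK.

Section P1.
Variable beta : R.
Hypothesis hb : 2 < beta.

Lemma r1_G : Gb beta (1 - 2 * lb beta) = gb beta - 3 * r1 beta / 2.
Proof.
  unfold gb, r1, Gb, lb.
  assert (E : ln (2/(3*beta)) = ln (1 - 2*(2/(3*beta))) - ln (3*beta/2 - 2)).
  { replace (2/(3*beta)) with ((1 - 2*(2/(3*beta))) * / (3*beta/2-2)) at 1 by (field; lra).
    assert (0 < 1 - 2*(2/(3*beta))). { apply (Rmult_lt_reg_r (3*beta)). lra. field_simplify; lra. }
    rewrite ln_mult, ln_Rinv. ring. all: try lra. all: try (apply Rinv_0_lt_compat; lra). }
  rewrite E. set (A := ln (1 - 2*(2/(3*beta)))). set (B := ln (3*beta/2-2)). field. lra.
Qed.

Lemma y1_exists r : 0 < r < r1 beta ->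
  exists y, y <= gb beta /\ Kb beta (y - 3*r/2) + Hb beta y + Kb beta y = 1.
Proof.
  intros [Hr Hr1]. pose proof (l_pos beta hb) as Hl. pose proof (l_lt beta hb) as Hl3.
  set (T := fun y => Kb beta (y - 3*r/2) + Hb beta y + Kb beta y - 1).
  destruct (Kb_spec beta hb (gb beta - 3*r/2) ltac:(lra)) as [Ha Ea].
  set (a := Kb beta (gb beta - 3*r/2)) in *.
  assert (Ha2 : a < 1 - 2 * lb beta).
  { destruct (Rlt_dec a (1 - 2*lb beta)); auto. exfalso.
    pose proof (G_decw beta hb (1 - 2*lb beta) a ltac:(lra) ltac:(lra)). rewrite r1_G in H. lra. }
  set (d := 1 - 2*lb beta - a). set (e := d/3).
  assert (Hd : 0 < d) by (unfold d; lra).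
  set (A1 := Gb beta (lb beta + e)). set (A2 := Gb beta (a + e) + 3*r/2).
  assert (HA1 : A1 < gb beta) by (apply G_lt_g; unfold e; lra).
  assert (HA2 : A2 < gb beta). { unfold A2. assert (Gb beta (a+e) < Gb beta a) by (apply G_dec; unfold e; lra). lra. }
  assert (Hg32 : -3/2 < gb beta). { replace (-3/2) with (Gb beta 1). apply G_lt_g; lra. unfold Gb. rewrite ln_1. field. lra. }
  set (m := Rmax (Rmax A1 A2) (-3/2)).
  assert (Hm : m < gb beta). { unfold m. apply Rmax_lub_lt. apply Rmax_lub_lt; auto. auto. }
  assert (Hm1 : A1 <= m) by (unfold m; eapply Rle_trans; [apply Rmax_l|apply Rmax_l]).
  assert (Hm2 : A2 <= m) by (unfold m; eapply Rle_trans; [apply Rmax_r|apply Rmax_l]).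
  assert (Hm3 : -3/2 <= m) by (unfold m; apply Rmax_r).
  set (yh := (m + gb beta)/2).
  assert (Hyh : m < yh < gb beta) by (unfold yh; lra).
  clearbody yh.
  assert (Tyh : T yh < 0).
  { unfold T. destruct (Kb_spec beta hb yh ltac:(lra)) as [Hb1 Eb1].
    destruct (Kb_spec beta hb (yh - 3*r/2) ltac:(lra)) as [Hb2 Eb2].
    destruct (Hb_spec beta hb yh ltac:(lra)) as [Hh1 Eh1].
    assert (Kb beta yh < lb beta + e).
    { destruct (Rlt_dec (Kb beta yh) (lb beta + e)); auto. exfalso.
      pose proof (G_decw beta hb (lb beta + e) (Kb beta yh) ltac:(unfold e; lra) ltac:(lra)). fold A1 in H. lra. }
    assert (Kb beta (yh - 3*r/2) < a + e).
    { destruct (Rlt_dec (Kb beta (yh - 3*r/2)) (a + e)); auto. exfalso.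
      pose proof (G_decw beta hb (a + e) (Kb beta (yh - 3*r/2)) ltac:(unfold e; lra) ltac:(lra)).
      unfold A2 in Hm2. lra. }
    unfold e, d in *. lra. }
  assert (Tyl : 0 < T (-3/2)).
  { unfold T. destruct (Kb_spec beta hb (-3/2) ltac:(lra)) as [Hb1 Eb1].
    assert (Kb beta (-3/2) = 1). { apply (K_inj beta hb); try lra. rewrite Eb1. unfold Gb. rewrite ln_1. field. lra. }
    destruct (Kb_spec beta hb (-3/2 - 3*r/2) ltac:(lra)) as [Hb2 Eb2].
    destruct (Hb_spec beta hb (-3/2) ltac:(lra)) as [Hh1 Eh1]. lra. }
  destruct (IVT_interv (fun y => - T y) (-3/2) yh) as [z [Hz Ez]].
  - intros y Hy. apply continuity_pt_opp. unfold T.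
    assert (y < gb beta) by lra.
    apply continuity_pt_minus; [|apply continuity_pt_const; intros u v; auto].
    apply continuity_pt_plus; [apply continuity_pt_plus|].
    + apply (continuity_pt_comp (fun y => y - 3*r/2) (Kb beta)).
      apply continuity_pt_minus. apply continuity_pt_id. apply continuity_pt_const; intros u v; auto.
      apply Kb_cont; auto; lra.
    + apply Hb_cont; auto.
    + apply Kb_cont; auto.
  - lra.
  - lra.
  - lra.
  - exists z. split. lra. unfold T in Ez. lra.
Qed.

Lemma y1_spec r : 0 < r < r1 beta ->
  y1 beta r <= gb beta /\ Kb beta (y1 beta r - 3*r/2) + Hb beta (y1 beta r) + Kb beta (y1 beta r) = 1.
Proof. intros. unfold y1, the_unique. apply epsilon_spec. apply y1_exists; auto. Qed.

Lemma part1 r : 0 < r < r1 beta -> h0 beta r < h1_sigma1 beta r.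
Proof.
  intros Hr. destruct (y1_spec r Hr) as [Hy Hs].
  set (y := y1 beta r) in *.
  pose proof (l_pos beta hb) as Hl. pose proof (l_lt beta hb) as Hl3.
  destruct (Kb_spec' beta hb y Hy) as [Hb1 Eb1].
  destruct (Kb_spec beta hb (y - 3*r/2) ltac:(lra)) as [Ha1 Ea1].
  destruct (Hb_spec' beta hb y Hy) as [Hc1 Ec1].
  set (a := Kb beta (y - 3*r/2)) in *. set (b := Kb beta y) in *. set (c := Hb beta y) in *.
  unfold h0, h1_sigma1. fold y b c.
  assert (Ec : c = 1 - a - b) by lra.
  set (t := (a+b)/2).
  assert (Ht : t = (1-c)/2) by (unfold t; lra).
  pose proof (phi_min beta r hb (proj1 Hr) t ltac:(lra)). unfold phi in H.
  pose proof (perm1 beta r t c Ht).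
  pose proof (core1 beta hb r a b ltac:(lra) ltac:(lra) ltac:(lra)). rewrite <- Ec in H1. fold t in H1.
  assert (0 < 3/2 * r * (t - c)) by (apply Rmult_lt_0_compat; lra).
  lra.
Qed.
End P1.

Lemma hfun_eq t : hfun t = -3*(t*(1-2*t))*Lf t - 3*t + 1.
Proof. unfold hfun, Lf. ring. Qed.

Lemma hfun_alt t : hfun t = -3*(t*(1-2*t))*ln ((1-2*t)/t) - 3*t + 1.
Proof. unfold hfun. ring. Qed.
Lemma h_der t : 0 < t < 1/2 -> is_derive hfun t (-3*(1-4*t)*Lf t).
Proof. intros H. apply (is_derive_ext (fun t => -3*(t*(1-2*t))*ln ((1-2*t)/t) - 3*t + 1)).
  intros t0. rewrite hfun_alt. reflexivity.
  auto_derive. split. lra. split. apply Rmult_lt_0_compat; [lra| apply Rinv_0_lt_compat; lra]. auto.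
  change (ln ((1 + - (2 * t)) * / t)) with (Lf t). set (LL := Lf t). field. split; lra. Qed.

Lemma h13 : hfun (1/3) = 0.
Proof. rewrite hfun_eq, Lf_13. lra. Qed.

Lemma h_dec x y : 0 < x -> x < y -> y <= 1/4 -> hfun y < hfun x.
Proof. intros.
  assert (hfun ((x+y)/2) < hfun x).
  { apply (mvt_neg hfun (fun t => -3*(1-4*t)*Lf t)). lra. intros; apply h_der; lra.
    intros. pose proof (Lf_pos x0 ltac:(lra)). assert (0 < (1-4*x0)*Lf x0) by (apply Rmult_lt_0_compat; lra). lra. }
  assert (hfun y <= hfun ((x+y)/2)).
  { apply (mvt_nonpos hfun (fun t => -3*(1-4*t)*Lf t)). lra. intros; apply h_der; lra.
    intros. pose proof (Lf_pos x0 ltac:(lra)). assert (0 <= (1-4*x0)*Lf x0) by (apply Rmult_le_pos; lra). lra. }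
  lra. Qed.

Lemma h_nonpos x : 1/4 <= x <= 1/3 -> hfun x <= 0.
Proof. intros. rewrite <- h13. apply (mvt_nonneg hfun (fun t => -3*(1-4*t)*Lf t)). lra. intros; apply h_der; lra.
  intros. pose proof (Lf_nonneg x0 ltac:(lra)). assert (0 <= (4*x0-1)*Lf x0) by (apply Rmult_le_pos; lra). lra. Qed.

Lemma h_lt1 t : 0 < t < 1/3 -> hfun t < 1.
Proof. intros. rewrite hfun_eq. pose proof (Lf_pos t H). assert (0 < t*(1-2*t)) by nra.
  assert (0 < t*(1-2*t)*Lf t) by (apply Rmult_lt_0_compat; lra). lra. Qed.

Lemma m0_exists r : 0 < r < 1 -> exists t, 0 < t < kr r /\ hfun t = r.
Proof.
  intros Hr. set (s := (1-r)/9). set (t0 := s*s).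
  assert (Hs : 0 < s < 1/9) by (unfold s; lra).
  assert (Ht0 : 0 < t0 < s) by (unfold t0; nra).
  assert (Hk : s < kr r) by (unfold kr, s; lra).
  assert (Hh0 : r < hfun t0).
  { rewrite hfun_eq. pose proof (Lf_pos t0 ltac:(unfold kr in Hk; lra)) as HL.
    assert (Lf t0 <= 2*(/s - 1)).
    { unfold Lf. apply Rle_trans with (ln (/t0)).
      apply ln_le'. apply Rdiv_lt_0_compat; lra. unfold Rdiv. pose proof (Rinv_0_lt_compat t0 ltac:(lra)). nra.
      unfold t0. rewrite Rinv_mult, ln_mult. pose proof (ln_le_xm1 (/s) ltac:(apply Rinv_0_lt_compat; lra)). lra.
      apply Rinv_0_lt_compat; lra. apply Rinv_0_lt_compat; lra. }
    assert (t0 * Lf t0 <= 2*s - 2*s*s). { unfold t0. replace (2*s - 2*s*s) with (s*s*(2*(/s-1))) by (field; lra).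
      apply Rmult_le_compat_l. nra. auto. }
    assert (t0 * (1-2*t0) * Lf t0 <= t0 * Lf t0). { assert (0 <= t0 * Lf t0) by (apply Rmult_le_pos; lra). nra. }
    unfold s in *. nra. }
  assert (Hhk : hfun (kr r) < r).
  { rewrite hfun_eq. assert (0 < kr r < 1/3) by (unfold kr; lra). pose proof (Lf_pos (kr r) H).
    assert (0 < kr r * (1 - 2*kr r) * Lf (kr r)) by (apply Rmult_lt_0_compat; nra). unfold kr in *. lra. }
  destruct (IVT_interv (fun t => r - hfun t) t0 (kr r)) as [z [Hz Ez]].
  - intros a Ha. apply continuity_pt_minus. apply continuity_pt_const; intros u v; auto.
    apply (der_cont _ _ _ (h_der a ltac:(unfold kr in *; lra))).
  - lra.
  - lra.
  - lra.
  - exists z. assert (z <> kr r) by (intro E; subst z; lra). split. lra. lra.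
Qed.

Lemma m0_spec r : 0 < r < 1 -> 0 < m0 r < 1/4 /\ m0 r < kr r /\ hfun (m0 r) = r.
Proof.
  intros Hr. assert (H : 0 < m0 r < kr r /\ hfun (m0 r) = r).
  { unfold m0, the_unique. apply epsilon_spec. apply m0_exists; auto. }
  destruct H as [H1 H2]. split; [|split]; try tauto.
  split. lra. destruct (Rlt_dec (m0 r) (1/4)); auto. exfalso.
  pose proof (h_nonpos (m0 r) ltac:(unfold kr in H1; lra)). lra.
Qed.

Lemma h_m_rel r m : hfun m = r -> 1 - r - 3*m = 3*(m*(1-2*m))*Lf m.
Proof. intros E. rewrite <- E, hfun_eq. ring. Qed.

Lemma ln4_lt : ln 4 < 3/2.
Proof.
  set (e1 := exp (3/32)).
  assert (H1 : 35/32 <= e1) by (unfold e1; pose proof (exp_ineq1_le (3/32)); lra).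
  assert (E : exp (3/2) = e1*e1*(e1*e1)*(e1*e1*(e1*e1))*(e1*e1*(e1*e1)*(e1*e1*(e1*e1)))).
  { unfold e1. rewrite <- !exp_plus. f_equal. field. }
  set (e2 := e1*e1) in *. assert (H2 : 1.196 <= e2) by (unfold e2; nra).
  set (e3 := e2*e2) in *. assert (H3 : 1.43 <= e3) by (unfold e3; nra).
  set (e4 := e3*e3) in *. assert (H4 : 2.04 <= e4) by (unfold e4; nra).
  assert (H5 : 4.16 <= e4*e4) by nra.
  rewrite <- (ln_exp (3/2)). apply ln_increasing. lra. lra.
Qed.

Section P2.
Variable beta : R.
Hypothesis hb : 2 < beta.

Lemma r1_pos : 0 < r1 beta.
Proof.
  unfold r1. set (x := 3*beta/2 - 2). assert (Hx : 1 < x) by (unfold x; lra).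
  assert (ln x < x - 1). { pose proof (exp_ineq1 (ln x) ltac:(pose proof (ln_pos' x Hx); lra)). rewrite exp_ln in H; lra. }
  assert (E : 1 - 2/beta - 2/(3*beta)*ln x = (2*x - 2 - 2 * ln x)/(3*beta)) by (unfold x; field; lra).
  rewrite E. apply Rdiv_lt_0_compat; lra.
Qed.

Lemma r2_exists : exists r, 0 < r < 1 /\ fr r (m0 r) = beta.
Proof.
  destruct (IVT_interv (fun t => 9*beta*(t*(1-2*t)) - 2) 0 (1/6)) as [ts [Hts Ets]].
  - intros a Ha. apply (der_cont _ _ (9*beta*(1-4*a))). auto_derive. auto. ring.
  - lra.
  - lra.
  - lra.
  - assert (Hts' : 0 < ts < 1/6). { split. destruct (Req_dec ts 0). subst. lra. lra.
      destruct (Req_dec ts (1/6)). subst. lra. lra. }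
    set (rs := hfun ts).
    assert (Hh6 : 0 < hfun (1/6)).
    { unfold hfun. replace ((1 - 2*(1/6))/(1/6)) with 4 by field. pose proof ln4_lt. lra. }
    assert (Hrs : 0 < rs < 1). { split. pose proof (h_dec ts (1/6) ltac:(lra) ltac:(lra) ltac:(lra)). unfold rs; lra.
      apply h_lt1; lra. }
    exists rs. split; auto.
    assert (Ers : hfun ts = rs) by reflexivity. clearbody rs.
    destruct (m0_spec rs Hrs) as [Hm1 [Hm2 Hm3]].
    assert (m0 rs = ts).
    { destruct (Rtotal_order (m0 rs) ts) as [H|[H|H]]; auto.
      pose proof (h_dec (m0 rs) ts ltac:(lra) H ltac:(lra)). lra.
      pose proof (h_dec ts (m0 rs) ltac:(lra) H ltac:(lra)). lra. }
    rewrite H. pose proof (h_m_rel rs ts Ers) as E. unfold fr. fold (Lf ts). rewrite E.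
    pose proof (Lf_pos ts ltac:(lra)).
    assert (9*(ts*(1-2*ts)) = 2/beta) by (apply (Rmult_eq_reg_l beta); [field_simplify; lra| lra]).
    replace (3 * (3 * (ts * (1 - 2 * ts)) * Lf ts)) with (9*(ts*(1-2*ts))*Lf ts) by ring. rewrite H1.
    field. split; lra.
Qed.

Lemma r2_spec : 0 < r2 beta < 1 /\ fr (r2 beta) (m0 (r2 beta)) = beta.
Proof. unfold r2, the_unique. apply epsilon_spec. apply r2_exists. Qed.

End P2.

Definition Qf r x := 2/(3*(1-r-3*x)) * Lf x.

Lemma Q_der r x : 0 < x < 1/2 -> 1 - r - 3*x <> 0 ->
  is_derive (Qf r) x (2*(r - hfun x)/(3*(x*(1-2*x))*(1-r-3*x)^2)).
Proof. intros H HD. apply (is_derive_ext (fun x => 2/(3*(1-r-3*x)) * ln ((1-2*x)/x))).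
  intros t0. reflexivity.
  auto_derive. repeat split; try lra. apply Rmult_lt_0_compat; [lra| apply Rinv_0_lt_compat; lra].
  change (ln ((1 + - (2 * x)) * / x)) with (Lf x). rewrite hfun_eq. set (LL := Lf x). field. repeat split; lra.
Qed.

Section P2b.
Variable beta : R.
Hypothesis hb : 2 < beta.

Lemma part2 r : r1 beta < r < r2 beta -> h0 beta r < h1_p beta r.
Proof.
  intros [Hr1 Hr2]. pose proof (r1_pos beta hb). destruct (r2_spec beta hb) as [Hr2b Er2].
  assert (Hr : 0 < r < 1) by lra.
  destruct (m0_spec r Hr) as [Hm1 [Hm2 Hm3]].
  destruct (m0_spec (r2 beta) Hr2b) as [Hn1 [Hn2 Hn3]].
  set (m := m0 r) in *. set (n := m0 (r2 beta)) in *.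
  assert (Hmn : n < m).
  { destruct (Rtotal_order n m) as [H1|[H1|H1]]; auto. exfalso. rewrite H1 in Hn3. lra.
    pose proof (h_dec m n ltac:(lra) H1 ltac:(lra)). lra. }
  assert (En : 9*beta*(n*(1-2*n)) = 2).
  { unfold fr in Er2. fold n in Er2. fold (Lf n) in Er2. rewrite (h_m_rel (r2 beta) n Hn3) in Er2.
    pose proof (Lf_pos n ltac:(unfold kr in *; lra)).
    replace (2 / (3 * (3 * (n * (1 - 2 * n)) * Lf n)) * Lf n) with (2 / (9 * (n * (1 - 2 * n)))) in Er2 by (field; split; [lra|nra]).
    assert (0 < n*(1-2*n)) by nra. rewrite <- Er2. field. lra. }
  assert (Em : 2 < 9*beta*(m*(1-2*m))) by (pose proof (quad_inc_s n m Hmn ltac:(lra)); nra).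
  assert (Hk : 0 < kr r < 1/3) by (unfold kr; lra).
  assert (HLm : 0 < Lf m) by (apply Lf_pos; lra).
  assert (Hgm : 0 < gf beta r m).
  { unfold gf. rewrite (h_m_rel r m Hm3).
    replace (3 * (3 * (m * (1 - 2 * m)) * Lf m) - 2 / beta * Lf m) with (Lf m * (9*beta*(m*(1-2*m)) - 2) / beta) by (field; lra).
    apply Rdiv_lt_0_compat. apply Rmult_lt_0_compat; lra. lra. }
  assert (Hex : exists t, m < t < kr r /\ fr r t = beta).
  { set (LK := Lf (kr r)). assert (HLK : 0 < LK) by (apply Lf_pos; lra).
    set (dl := Rmin ((kr r - m)/2) (LK/(9*beta))).
    assert (Hdl : 0 < dl). { apply Rmin_glb_lt. lra. apply Rdiv_lt_0_compat; lra. }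
    assert (Hdl1 : dl <= (kr r - m)/2) by apply Rmin_l.
    assert (Hdl2 : dl <= LK/(9*beta)) by apply Rmin_r.
    set (t1 := kr r - dl).
    assert (Hg1 : gf beta r t1 < 0).
    { unfold gf. assert (Lf (kr r) < Lf t1) by (apply Lf_dec; unfold t1; lra). fold LK in H0.
      assert (1 - r - 3*t1 = 3*dl) by (unfold t1, kr; field).
      rewrite H1. assert (2/beta*LK < 2/beta * Lf t1) by (apply Rmult_lt_compat_l; [apply Rdiv_lt_0_compat|]; lra).
      assert (9*dl <= LK/beta). { replace (LK/beta) with (9*(LK/(9*beta))) by (field; lra). lra. }
      assert (LK/beta < 2/beta*LK). { replace (2/beta*LK) with (2*(LK/beta)) by (field; lra). assert (0 < LK/beta) by (apply Rdiv_lt_0_compat; lra). lra. }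
      lra. }
    destruct (IVT_interv (fun t => - gf beta r t) m t1) as [z [Hz Ez]].
    - intros a Ha. apply continuity_pt_opp. apply (der_cont _ _ _ (gf_der beta r a ltac:(lra) ltac:(unfold t1 in *; lra))).
    - unfold t1; lra.
    - lra.
    - lra.
    - exists z. assert (z <> m) by (intro E; subst z; lra). split. unfold t1 in Hz; lra.
      apply fr_gf; try lra. unfold t1, kr in *; lra. }
  assert (Hu : m < ub beta r < kr r /\ fr r (ub beta r) = beta).
  { unfold ub, the_unique. apply epsilon_spec. exact Hex. }
  destruct Hu as [Hu1 Hu2]. set (u := ub beta r) in *.
  assert (Hgu : gf beta r u = 0) by (apply fr_gf; try lra; unfold kr in *; lra).
  assert (Hhr : forall x, m < x < kr r -> hfun x < r).
  { intros x Hx. destruct (Rle_dec x (1/4)). pose proof (h_dec m x ltac:(lra) ltac:(lra) r0). lra.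
    pose proof (h_nonpos x ltac:(lra)). lra. }
  assert (Hg1 : forall x, u <= x <= kr r -> gf beta r x <= 0).
  { intros x Hx. destruct (Req_dec x (kr r)).
    - subst x. unfold gf. pose proof (Lf_pos (kr r) ltac:(lra)). assert (1 - r - 3*kr r = 0) by (unfold kr; field).
      rewrite H1. assert (0 < 2/beta * Lf (kr r)) by (apply Rmult_lt_0_compat; [apply Rdiv_lt_0_compat|]; lra). lra.
    - assert (Qf r u <= Qf r x).
      { apply (mvt_nonneg (Qf r) (fun x => 2*(r - hfun x)/(3*(x*(1-2*x))*(1-r-3*x)^2))). lra.
        intros; apply Q_der; unfold kr in *; lra.
        intros y Hy. assert (hfun y < r) by (apply Hhr; lra).
        assert (0 < 1 - r - 3*y) by (unfold kr in *; lra).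
        left. apply Rdiv_lt_0_compat. lra. apply Rmult_lt_0_compat. nra. apply pow_lt; lra. }
      unfold Qf in H1. fold (Lf u) in Hu2. unfold fr in Hu2. fold (Lf u) in Hu2. rewrite Hu2 in H1.
      assert (HD : 0 < 1 - r - 3*x) by (unfold kr in *; lra).
      unfold gf. assert (beta * (3*(1-r-3*x)) <= 2 * Lf x).
      { apply (Rmult_le_reg_r (/(3*(1-r-3*x)))). apply Rinv_0_lt_compat; lra.
        replace (beta * (3 * (1 - r - 3 * x)) * / (3 * (1 - r - 3 * x))) with beta by (field; lra).
        replace (2 * Lf x * / (3 * (1 - r - 3 * x))) with (2 / (3 * (1 - r - 3 * x)) * Lf x) by (field; lra). lra. }
      assert (3*(1-r-3*x) <= 2/beta * Lf x).
      { apply (Rmult_le_reg_l beta). lra. replace (beta * (2/beta*Lf x)) with (2*Lf x) by (field; lra). lra. }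
      lra. }
  assert (Hg2 : forall x, kr r <= x <= 1/3 -> gf beta r x < 0).
  { intros x Hx. destruct (Req_dec x (1/3)). subst x. rewrite gf13. lra.
    unfold gf. pose proof (Lf_pos x ltac:(lra)). assert (0 < 2/beta * Lf x) by (apply Rmult_lt_0_compat; [apply Rdiv_lt_0_compat|]; lra).
    unfold kr in Hx. lra. }
  assert (S1 : phi beta r (kr r) <= phi beta r u).
  { apply (mvt_nonpos (phi beta r) (gf beta r)). lra. intros; apply phi_der; lra. auto. }
  assert (S2 : phi beta r (1/3) < phi beta r (kr r)).
  { apply (mvt_neg (phi beta r) (gf beta r)). lra. intros; apply phi_der; lra. auto. }
  assert (S3 : phi beta r (qb beta r) <= phi beta r (1/3)) by (apply phi_min; lra).
  unfold h0, h1_p. fold u. unfold phi in *. lra.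
Qed.
End P2b.

Theorem lemma5p10 (beta : R) (hbeta : 2 < beta) :
  (forall r, 0 < r < r1 beta -> h0 beta r < h1_sigma1 beta r) /\
  (forall r, r1 beta < r < r2 beta -> h0 beta r < h1_p beta r).
Proof. split. apply part1; auto. apply part2; auto. Qed.
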